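(* For every $n\ge0$, the map $\mathbf{Dyck}$ restricts to a bijection from the set of compacted binary trees of size $n$ onto the set of C-decorated Dyck paths of length $2n$ (i.e. C-decorated paths ending at $(n,n)$).
   Context: Binary trees are rooted plane trees in which each node is a leaf or an internal node with ordered left and right subtrees; size = number of internal nodes; postorder visits left subtree, right subtree, root. A relaxed binary tree $C$ of size $n$ is obtained from a binary tree $C_*$ with $n$ internal nodes (its spine) by keeping the left-most leaf and turning every other leaf $\ell$ into a pointer to a vertex (internal node or the left-most leaf) preceding $\ell$ in postorder; it is a DAG on the internal nodes and the left-most leaf, each internal node having a left/right out-edge to its child if that child is internal or the left-most leaf, and otherwise to the pointer's target. For a vertex $u$ let $B(u)$ be a single leaf if $u$ is the left-most leaf, and otherwise the binary tree with left/right subtrees $B(v),B(w)$ where $v,w$ are the left/right out-neighbours of $u$. $C$ is compacted if $B(u)\not\cong B(v)$ for all distinct vertices $u,v$. A horizontally decorated path is a lattice path from $(0,0)$ with steps $H=(1,0)$, $V=(0,1)$ in the region $0\le y\le x$, each $H$ step decorated by a number in $\{1,\dots,k+1\}$, $k$ its $y$-coordinate. The map $\mathbf{Dyck}$: label the internal nodes and the left-most leaf of $C_*$ in postorder by $1,\dots,n+1$. Define words recursively by $\mathbf{Path}(\text{leaf})=H$ and $\mathbf{Path}((T_1,T_2))=\mathbf{Path}(T_1)\mathbf{Path}(T_2)V$. The word $\mathbf{Path}(C_* )$ begins with the $H$ of the left-most leaf; removing it gives a path $P_0$ from $(0,0)$ to $(n,n)$ in $0\le y\le x$, whose $H$ steps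 correspond to the non-left-most leaves of $C_*$ (i.e. to pointers). Decorating each $H$ step of $P_0$ with the label of the vertex its pointer points to gives the horizontally decorated path $\mathbf{Dyck}(C)$. C-decorated paths: in a horizontally decorated path, give each $H$ step the label equal to its decoration and each $V$ step the label equal to its final $y$-coordinate plus one; write $\mathcal{L}(S)$ for the label of step $S$. To each $V$ step associate a pair $(v_1,v_2)$: $v_2=\mathcal{L}(S')$ where $S'$ is the step immediately before $V$; for $v_1$, draw the line of slope $1$ from the endpoint of $V$ in the south-west direction until it touches the path again, and let $S''$ be the last step before $V$ whose endpoint lies on this line; set $v_1=\mathcal{L}(S'')$, or $v_1=1$ if there is no such step. A C-decorated path is a horizontally decorated path such that for every occurrence of three consecutive steps $HHV$ whose two $H$ steps have decorations $h_1,h_2$, one has $(h_1,h_2)\ne(v_1,v_2)$ for every $V$ step preceding this occurrence. *)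

(* Defs.v *)
From mathcomp Require Import all_boot.
Set Implicit Arguments. Unset Strict Implicit. Unset Printing Implicit Defensive.

Inductive btree := BLeaf | BNode of btree & btree.

(* Relaxed binary trees.  A relaxed binary tree is encoded by its      *)
(* spine C_* in which the left-most leaf is marked [RL] and every other *)
(* leaf [l] is replaced by [RP k], meaning that the pointer [l] points  *)
(* to the vertex with postorder label [k] (vertices = internal nodes    *)
(* and the left-most leaf, labelled 1..n+1 in postorder).              *)
Inductive rtree := RL | RP of nat | RN of rtree & rtree.

Fixpoint spine (t : rtree) : btree :=
  match t with RN l r => BNode (spine l) (spine r) | _ => BLeaf end.

Fixpoint bsize (t : btree) : nat :=
  match t with BLeaf => 0 | BNode l r => bsize l + bsize r + 1 end.

Fixpoint no_RL (t : rtree) : bool :=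
  match t with RL => false | RP _ => true | RN l r => no_RL l && no_RL r end.

Fixpoint leftmost_ok (t : rtree) : bool :=
  match t with RL => true | RP _ => false | RN l r => leftmost_ok l && no_RL r end.

(* postorder tokens: left-most leaf, pointer leaf (with target), internal node *)
Inductive tok := TL | TP of nat | TN.

Fixpoint post (t : rtree) : seq tok :=
  match t with
  | RL => [:: TL]
  | RP k => [:: TP k]
  | RN l r => post l ++ post r ++ [:: TN]
  end.

(* vertices of the DAG: internal nodes and the left-most leaf *)
Definition is_vertex (x : tok) : bool :=
  match x with TP _ => false | _ => true end.

(* every pointer points to a vertex (label in 1..#vertices so far)     *)
(* preceding it in postorder                                          *)
Definition pointers_ok (t : rtree) : Prop :=
  forall i, i < size (post t) ->
    match nth TN (post t) i with
    | TP k => 1 <= k <= count is_vertex (take i (post t))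
    | _ => True
    end.

Definition relaxed (n : nat) (t : rtree) : Prop :=
  [/\ bsize (spine t) = n, leftmost_ok t & pointers_ok t].

(* B(u) for all vertices u.  [expand t env] traverses t in postorder;  *)
(* [env] lists B(v) for the vertices v already visited, in label order; *)
(* it returns the tree B(root of t) (for a pointer leaf: B of its       *)
(* target, i.e. of the corresponding out-neighbour) and the new env.    *)
Fixpoint expand (t : rtree) (env : seq btree) : btree * seq btree :=
  match t with
  | RL => (BLeaf, rcons env BLeaf)
  | RP k => (nth BLeaf env k.-1, env)
  | RN l r =>
      let (bl, env1) := expand l env in
      let (br, env2) := expand r env1 in
      (BNode bl br, rcons env2 (BNode bl br))
  end.

(* [B_list t]`_(k-1) = B(vertex with label k), k = 1..n+1 *)
Definition B_list (t : rtree) : seq btree := (expand t [::]).2.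

Definition compacted (t : rtree) : Prop :=
  forall i j, i < j < size (B_list t) ->
    nth BLeaf (B_list t) i <> nth BLeaf (B_list t) j.

Inductive step := H of nat | V.

Definition isH (s : step) : bool := if s is H _ then true else false.
Definition isV (s : step) : bool := if s is V then true else false.

(* coordinates of the endpoint of step i (0-based) *)
Definition xend (p : seq step) (i : nat) : nat := count isH (take i.+1 p).
Definition yend (p : seq step) (i : nat) : nat := count isV (take i.+1 p).

Definition hdec_path (p : seq step) : Prop :=
  forall i, i < size p ->
    yend p i <= xend p i /\
    match nth V p i with
    | H k => 1 <= k <= (count isV (take i p)).+1
    | V => True
    end.

Definition ends_at (p : seq step) (x y : nat) : Prop :=
  count isH p = x /\ count isV p = y.

Definition lab (p : seq step) (i : nat) : nat :=
  match nth V p i with H k => k | V => (yend p i).+1 end.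

(* the endpoint of step i lies on the slope-1 line through the endpoint of step j *)
Definition on_line (p : seq step) (i j : nat) : bool :=
  xend p i + yend p j == xend p j + yend p i.

Definition v1 (p : seq step) (j : nat) : nat :=
  let cands := [seq i <- iota 0 j | on_line p i j] in
  if cands is [::] then 1 else lab p (last 0 cands).

Definition v2 (p : seq step) (j : nat) : nat := lab p j.-1.

Definition C_decorated (p : seq step) : Prop :=
  hdec_path p /\
  forall i h1 h2, i.+2 < size p ->
    nth V p i = H h1 -> nth V p i.+1 = H h2 -> nth V p i.+2 = V ->
    forall j, j < i -> nth V p j = V -> (h1, h2) <> (v1 p j, v2 p j).

(* The map Dyck: Path(C_* ) with the left-most leaf's H removed, each H *)
(* (a pointer) decorated with the label of its target.                 *)
Definition tok_step (x : tok) : step :=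
  match x with TP k => H k | TN => V | TL => H 1 (* never used after behead *) end.

Definition Dyck (t : rtree) : seq step := map tok_step (behead (post t)).

(* Main.v *)
Require Import Defs.
From mathcomp Require Import all_boot zify.
Set Implicit Arguments. Unset Strict Implicit. Unset Printing Implicit Defensive.

Definition isTN (x : tok) : bool := if x is TN then true else false.
Definition isLf (x : tok) : bool := ~~ isTN x.
Definition isTL (x : tok) : bool := if x is TL then true else false.

Lemma post_ne t : 0 < size (post t).
Proof. case: t => [||l r] //=. by rewrite !size_cat /= addn1 addnS. Qed.

Lemma noRL_post t : no_RL t = ~~ has isTL (post t).
Proof. by elim: t => [||l IHl r IHr] //=; rewrite !has_cat /= IHl IHr negb_or orbF. Qed.

Lemma lm_post t : leftmost_ok t <-> exists s', post t = TL :: s' /\ ~~ has isTL s'.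
Proof.
elim: t => [|k|l IHl r IHr] /=.
- by split => // _; exists [::].
- by split => // -[s' [] ].
- split.
  + case/andP => /IHl [s1 [-> H1]] H2; exists (s1 ++ post r ++ [:: TN]); split => //.
    by rewrite !has_cat !negb_or H1 -noRL_post H2.
  + case=> s' [] E2; move: E2; case E: (post l) (post_ne l) => [|h tl] //= _ [Eh Es'].
    subst; rewrite !has_cat !negb_or => /andP [H1 /andP [H2 _]].
    by rewrite noRL_post H2 andbT; apply/IHl; exists tl.
Qed.

Lemma cntTN_post t : count isTN (post t) = bsize (spine t).
Proof. by elim: t => [||l IHl r IHr] //=; rewrite !count_cat IHl IHr /=; lia. Qed.

Lemma cntLf_post t : count isLf (post t) = (count isTN (post t)).+1.
Proof. by elim: t => [||l IHl r IHr] //=; rewrite !count_cat IHl IHr /=; lia. Qed.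

Definition valid (s : seq tok) :=
  forall m, 0 < m <= size s -> count isTN (take m s) < count isLf (take m s).

Lemma valid_post t : valid (post t).
Proof.
elim: t => [|k|l IHl r IHr] /=.
- by case=> [|[|m]].
- by case=> [|[|m]].
- move=> m /andP [m0 mS]; rewrite take_cat; case: ifP => ml.
    by apply: IHl; rewrite m0 ltnW.
  rewrite take_cat; case: ifP => mr.
    rewrite !count_cat cntLf_post.
    case: (posnP (m - size (post l))) => [->|mp]; first by rewrite take0 /=; lia.
    have := IHr (m - size (post l)); rewrite mp ltnW //=; lia.
  move: mS ml mr; rewrite !size_cat /= => mS /negbT ml /negbT mr.
  rewrite -leqNgt in ml; rewrite -leqNgt in mr.
  have : m - size (post l) - size (post r) <= 1 by lia.
  case: (m - size (post l) - size (post r)) => [|[|]] // _;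
  by rewrite /= !count_cat !cntLf_post /=; lia.
Qed.

Definition pstep (st : seq rtree) (x : tok) : seq rtree :=
  match x with
  | TL => RL :: st
  | TP k => RP k :: st
  | TN => if st is r :: l :: st' then RN l r :: st' else st
  end.

Lemma parse_post t st s : foldl pstep st (post t ++ s) = foldl pstep (t :: st) s.
Proof.
elim: t st s => //= l IHl r IHr st s.
by rewrite -!catA IHl IHr.
Qed.

Lemma post_inj t1 t2 : post t1 = post t2 -> t1 = t2.
Proof.
move=> E; have := parse_post t1 [::] [::]; rewrite E parse_post /=.
by case.
Qed.

Lemma parse_ok s st :
  (forall i, i < size s -> nth TN s i = TN ->
     count isTN (take i s) + 2 <= size st + count isLf (take i s)) ->
  flatten (map post (rev (foldl pstep st s))) = flatten (map post (rev st)) ++ s /\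
  size (foldl pstep st s) + count isTN s = size st + count isLf s.
Proof.
elim: s st => [|x s IH] st H /=; first by rewrite cats0 addn0.
have H' : forall i, i < size s -> nth TN s i = TN ->
     count isTN (take i s) + 2 <= size (pstep st x) + count isLf (take i s).
  move=> i iS ni; have := H i.+1 iS ni; rewrite /=.
  case: x H => [|k|] H /=; rewrite /isLf /=; try lia.
  have := H 0 isT erefl; rewrite /=.
  case: st H => [|r [|l st]] //= _ _; lia.
have [E1 E2] := IH _ H'; split.
  rewrite E1; case: x H {H' E1 E2} => [|k|] H /=;
    rewrite ?rev_cons -?cats1 ?map_cat ?flatten_cat /= ?cats0 -?catA //.
  have := H 0 isT erefl; rewrite /=.
  case: st H => [|r [|l st]] //= _ _.
  by rewrite !rev_cons -!cats1 !map_cat !flatten_cat /= !cats0 -!catA.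
case: x H E2 {H' E1} => [|k|] H /= E2; rewrite /isLf /= in E2 *; try lia.
have := H 0 isT erefl; rewrite /=.
case: st H E2 => [|r [|l st]] //= _ E2 _; lia.
Qed.

Definition bstep (p : seq btree * seq btree) (x : tok) : seq btree * seq btree :=
  let: (stk, env) := p in
  match x with
  | TL => (BLeaf :: stk, rcons env BLeaf)
  | TP k => (nth BLeaf env k.-1 :: stk, env)
  | TN => if stk is r :: l :: stk' then (BNode l r :: stk', rcons env (BNode l r)) else p
  end.

Lemma run_post t stk env s :
  foldl bstep (stk, env) (post t ++ s) =
  foldl bstep ((expand t env).1 :: stk, (expand t env).2) s.
Proof.
elim: t stk env s => [|k|l IHl r IHr] stk env s //=.
rewrite -!catA IHl; case El: (expand l env) => [bl env1] /=.
rewrite IHr; case Er: (expand r env1) => [br env2] /=.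
by [].
Qed.

Lemma Blist_run t : B_list t = (foldl bstep ([::], [::]) (post t)).2.
Proof.
rewrite -(cats0 (post t)) run_post /B_list /=.
by case: (expand t [::]).
Qed.

Definition cntv (s : seq tok) := count is_vertex s.
Definition D (s : seq tok) m := count isLf (take m s) - count isTN (take m s).
Definition ptr (s : seq tok) := forall i, i < size s ->
  match nth TN s i with TP k => 1 <= k <= count is_vertex (take i s) | _ => True end.
Definition st (s : seq tok) m := foldl bstep ([::], [::]) (take m s).
Definition E (s : seq tok) := (foldl bstep ([::], [::]) s).2.
Definition val (s : seq tok) i :=
  match nth TN s i with
  | TP k => nth BLeaf (E s) k.-1
  | _ => nth BLeaf (E s) (cntv (take i.+1 s)).-1
  end.

Lemma cnt_S (P : pred tok) s m : m < size s ->
  count P (take m.+1 s) = count P (take m s) + P (nth TN s m).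
Proof. by move=> ms; rewrite (take_nth TN) // -cats1 count_cat /= addn0. Qed.

Lemma st_S s m : m < size s -> st s m.+1 = bstep (st s m) (nth TN s m).
Proof. by move=> ms; rewrite /st (take_nth TN) // foldl_rcons. Qed.

Lemma bstep_env p x : exists w, (bstep p x).2 = p.2 ++ w.
Proof.
case: p => stk env; case: x => [|k|] /=; try by exists [:: BLeaf]; rewrite cats1.
- by exists [::]; rewrite cats0.
- case: stk => [|r [|l stk]] /=; try by exists [::]; rewrite cats0.
  by exists [:: BNode l r]; rewrite cats1.
Qed.

Lemma run_env u p : exists w, (foldl bstep p u).2 = p.2 ++ w.
Proof.
elim: u p => [|x u IH] p /=; first by exists [::]; rewrite cats0.
have [w1 ->] := IH (bstep p x); have [w2 ->] := bstep_env p x.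
by exists (w2 ++ w1); rewrite catA.
Qed.

Lemma valid_le s m : valid s -> m <= size s ->
  count isTN (take m s) <= count isLf (take m s).
Proof.
move=> Hv ms; case: (posnP m) => [->|mp]; first by rewrite take0.
by apply: ltnW; apply: Hv; rewrite mp.
Qed.

Lemma TN_D s m : valid s -> m < size s -> nth TN s m = TN ->
  count isTN (take m s) + 2 <= count isLf (take m s).
Proof.
move=> Hv ms E1; have := Hv m.+1; rewrite ms !cnt_S // E1 /isLf /= => /(_ isT).
lia.
Qed.

Lemma st_size s m : valid s -> m <= size s ->
  size (st s m).1 = D s m /\ size (st s m).2 = cntv (take m s).
Proof.
move=> Hv; elim: m => [|m IH] ms; first by rewrite /st /D /cntv take0.
have ms' : m < size s by [].
have [IH1 IH2] := IH (ltnW ms).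
have := valid_le Hv (ltnW ms); have := TN_D Hv ms'.
move: IH1 IH2; rewrite st_S // /D /cntv !cnt_S //.
case: (st s m) => stk env /=.
case: (nth TN s m) => [|k|] /= IH1 IH2 H H2; rewrite /isLf /= ?size_rcons in IH1 H H2 *; try lia.
have := H erefl; case: stk IH1 => [|r [|l stk]] /= IH1 H3; try lia.
by rewrite size_rcons; lia.
Qed.

Lemma st_env s m : valid s -> m <= size s ->
  (st s m).2 = take (cntv (take m s)) (E s).
Proof.
move=> Hv ms; have [_ H2] := st_size Hv ms; rewrite -H2.
have -> : E s = (foldl bstep (st s m) (drop m s)).2 by rewrite /st -foldl_cat cat_take_drop.
by have [w ->] := run_env (drop m s) (st s m); rewrite take_size_cat.
Qed.

Lemma st_cases s m : valid s -> m < size s ->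
  match nth TN s m with
  | TL => st s m.+1 = (BLeaf :: (st s m).1, rcons (st s m).2 BLeaf)
  | TP k => st s m.+1 = (nth BLeaf (st s m).2 k.-1 :: (st s m).1, (st s m).2)
  | TN => exists r l rest, (st s m).1 = r :: l :: rest /\
          st s m.+1 = (BNode l r :: rest, rcons (st s m).2 (BNode l r))
  end.
Proof.
move=> Hv ms; have := TN_D Hv ms; have [H1 _] := st_size Hv (ltnW ms).
rewrite st_S //; case: (st s m) H1 => stk env /= H1.
case: (nth TN s m) => [|k|] // H; have := H erefl; rewrite /D in H1.
case: stk H1 => [|r [|l stk]] /= H1 H2; try lia.
by exists r, l, stk.
Qed.

Lemma D_S s m : valid s -> m < size s ->
  if isTN (nth TN s m) then D s m = (D s m.+1).+1 /\ 2 <= D s m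
  else D s m.+1 = (D s m).+1.
Proof.
move=> Hv ms; have := TN_D Hv ms; have := valid_le Hv (ltnW ms).
rewrite /D !cnt_S //; case: (nth TN s m) => [|k|] /= H1 H2; rewrite /isLf /= in H1 H2 *; try lia.
have := H2 erefl; lia.
Qed.

Lemma D_pos s m : valid s -> 0 < m <= size s -> 0 < D s m.
Proof. by move=> Hv /Hv; rewrite /D; lia. Qed.

Lemma E_app s m : valid s -> m < size s -> is_vertex (nth TN s m) ->
  nth BLeaf (E s) (cntv (take m s)) = nth BLeaf (st s m.+1).1 0.
Proof.
move=> Hv ms Hx; have := st_env Hv ms; have [_ H2] := st_size Hv (ltnW ms).
rewrite /cntv cnt_S // -/(cntv _) Hx addn1 -H2.
have := st_cases Hv ms.
case: (nth TN s m) Hx => [|k|] //= _.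
- move=> -> /= E1.
  by rewrite -(nth_take _ (ltnSn _)) -E1 nth_rcons ltnn eqxx.
- case=> r [l [rest [_ -> ]]] /= E1.
  by rewrite -(nth_take _ (ltnSn _)) -E1 nth_rcons ltnn eqxx.
Qed.

Lemma top_val s m : valid s -> ptr s -> m < size s ->
  nth BLeaf (st s m.+1).1 0 = val s m.
Proof.
move=> Hv Hp ms; rewrite /val.
case Ex: (nth TN s m) => [|k|].
- by rewrite /cntv cnt_S // Ex addn1 /= E_app // Ex.
- have := st_cases Hv ms; rewrite Ex => -> /=.
  have := Hp m ms; rewrite Ex => /andP [k1 k2].
  by rewrite st_env ?(ltnW ms) // nth_take // /cntv; lia.
- by rewrite /cntv cnt_S // Ex addn1 /= E_app // Ex.
Qed.

Lemma stack_nth s m d k : valid s -> ptr s -> m <= size s ->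
  0 < d <= D s m -> k <= m -> D s k = d ->
  (forall k', k < k' <= m -> D s k' <> d) ->
  nth BLeaf (st s m).1 (D s m - d) = val s k.-1.
Proof.
move=> Hv Hp; elim: m d k => [|m IH] d k ms Hd km Dk Hk.
  by rewrite /D take0 /= in Hd; lia.
have ms' : m < size s by [].
case: (ltngtP k m.+1) km => // [km|Ek] _; last first.
  by subst k; rewrite -Dk subnn top_val.
have Dm1 : D s m.+1 <> d by apply: Hk; rewrite km /=.
have := D_S Hv ms'; have := st_cases Hv ms'.
case: (nth TN s m) => [|k0|] /=.
- move=> -> /= HD.
  have Hd' : 0 < d <= D s m by lia.
  rewrite -(IH d k (ltnW ms) Hd' km Dk); last by move=> k' /andP [a b]; apply: Hk; lia.
  by rewrite HD subSn //; lia.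
- move=> -> /= HD.
  have Hd' : 0 < d <= D s m by lia.
  rewrite -(IH d k (ltnW ms) Hd' km Dk); last by move=> k' /andP [a b]; apply: Hk; lia.
  by rewrite HD subSn //; lia.
- case=> r [l [rest [E1 ->]]] /= [HD HD2].
  have Hd' : 0 < d <= D s m by lia.
  rewrite -(IH d k (ltnW ms) Hd' km Dk); last by move=> k' /andP [a b]; apply: Hk; lia.
  have [q [e1 e2]] : exists q, D s m - d = q.+2 /\ D s m.+1 - d = q.+1.
    by exists (D s m.+1 - d - 1); lia.
  by rewrite E1 e1 e2.
Qed.

Lemma count_take_mono (P : pred tok) a b u : a <= b ->
  count P (take a u) <= count P (take b u).
Proof. by move=> ab; rewrite -(take_takel u ab) -{2}(cat_take_drop a (take b u)) count_cat leq_addr. Qed.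

Lemma cntv_split u : count is_vertex u = count isTN u + count isTL u.
Proof. by elim: u => [|[|k|] u IH] //=; rewrite IH; lia. Qed.

Lemma count_take_le (P : pred tok) i u : count P (take i u) <= count P u.
Proof. by rewrite -{2}(cat_take_drop i u) count_cat leq_addr. Qed.

Lemma noTL_nth u i : ~~ has isTL u -> i < size u -> ~~ isTL (nth TN u i).
Proof.
elim: u i => [|x u IH] [|i] //=; rewrite negb_or => /andP [h1 h2] iu //.
exact: IH.
Qed.

Lemma IVT (f : nat -> nat) a b c : a <= b ->
  (forall k, a <= k < b -> f k.+1 <= (f k).+1) -> f a <= c <= f b ->
  exists k, a <= k <= b /\ f k = c.
Proof.
elim: b => [|b IH] ab Hf Hc.
  have a0 : a = 0 by lia.
  subst a; exists 0; split => //; lia.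
case: (ltngtP c (f b.+1)) => [cl|cg|ce]; last first.
  by exists b.+1; split; [rewrite ab leqnn | rewrite ce].
  lia.
- have ab' : a <= b.
    rewrite leqNgt; apply/negP => ab2; have ae : a = b.+1 by lia.
    subst a; lia.
  have Hc' : f a <= c <= f b.
    by have := Hf b; rewrite ab' ltnSn /= => /(_ isT); lia.
  have Hf' : forall k, a <= k < b -> f k.+1 <= (f k).+1.
    by move=> k /andP [x y]; apply: Hf; lia.
  have [k [hk fk]] := IH ab' Hf' Hc'.
  by exists k; split => //; lia.
Qed.

Lemma exists_last (P : pred nat) j : (exists i, i < j /\ P i) ->
  exists i, [/\ i < j, P i & forall i', i < i' < j -> ~~ P i'].
Proof.
elim: j => [|j IH] [i [ij Pi]] //.
case Pj: (P j).
  by exists j; split => // i' /andP [a b]; lia.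
have ij' : i < j.
  rewrite ltn_neqAle -ltnS ij andbT; apply/negP => /eqP e; subst i.
  by rewrite Pi in Pj.
have [i0 [a b c]] := IH (ex_intro _ i (conj ij' Pi)).
exists i0; split => //; first by lia.
move=> i' /andP [x y]; case: (ltngtP i' j) => [y'|y'|e]; first by apply: c; rewrite x.
  lia.
by subst i'; rewrite Pj.
Qed.

Lemma last_filter_iota (P : pred nat) j i : i < j -> P i ->
  (forall i', i < i' < j -> ~~ P i') -> last 0 [seq x <- iota 0 j | P x] = i.
Proof.
move=> ij Pi H.
have -> : j = i.+1 + (j - i.+1) by lia.
rewrite iotaD filter_cat.
have -> : [seq x <- iota (0 + i.+1) (j - i.+1) | P x] = [::].
  apply/eqP; rewrite -[_ == _]negbK -has_filter; apply/hasPn => x.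
  rewrite mem_iota => /andP [a b]; apply: H; lia.
by rewrite cats0 -addn1 iotaD filter_cat /= Pi last_cat.
Qed.


Definition hyp (s s' : seq tok) (p : seq step) :=
  [/\ s = TL :: s', ~~ has isTL s' & p = map tok_step s'].

Lemma hyp_size s s' p : hyp s s' p -> size s = (size p).+1.
Proof. by case=> -> _ ->; rewrite /= size_map. Qed.

Lemma hyp_H s s' p i : hyp s s' p -> count isH (take i p) = count isLf (take i s').
Proof. by case=> _ _ ->; rewrite -map_take count_map; apply: eq_count; case. Qed.

Lemma hyp_V s s' p i : hyp s s' p -> count isV (take i p) = count isTN (take i s').
Proof. by case=> _ _ ->; rewrite -map_take count_map; apply: eq_count; case. Qed.

Lemma hyp_cntv s s' p i : hyp s s' p ->
  count is_vertex (take i.+1 s) = (count isTN (take i.+1 s)).+1.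
Proof.
case=> -> H _ /=; rewrite cntv_split.
have : count isTL (take i s') <= count isTL s' by apply: count_take_le.
by move: H; rewrite has_count; lia.
Qed.

Lemma hyp_D s s' p i : hyp s s' p -> i < size p ->
  D s i.+2 = (xend p i).+1 - yend p i.
Proof.
move=> h ip; rewrite /D /xend /yend (hyp_H _ h) (hyp_V _ h).
by case: h => -> _ _.
Qed.

Lemma hyp_yx s s' p i : hyp s s' p -> valid s -> i < size p -> yend p i <= xend p i.
Proof.
move=> h Hv ip; have H2 : 0 < i.+2 <= size s by rewrite (hyp_size h); lia.
have := Hv _ H2.
rewrite /xend /yend (hyp_H _ h) (hyp_V _ h).
by case: h => -> _ _ /=; rewrite /isLf /=; lia.
Qed.

Lemma hyp_online s s' p i j : hyp s s' p -> valid s -> i < size p -> j < size p ->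
  on_line p i j = (D s i.+2 == D s j.+2).
Proof.
move=> h Hv ip jp; rewrite /on_line (hyp_D h ip) (hyp_D h jp).
have := hyp_yx h Hv ip; have := hyp_yx h Hv jp.
move=> h1 h2; apply/eqP/eqP; lia.
Qed.

Lemma hyp_nth s s' p i : hyp s s' p -> i < size p ->
  nth V p i = tok_step (nth TN s i.+1) /\ ~~ isTL (nth TN s i.+1).
Proof.
case=> -> H -> ip; rewrite size_map in ip.
by rewrite (nth_map TN) //=; split => //; apply: noTL_nth.
Qed.

Lemma hyp_lab s s' p i : hyp s s' p -> valid s -> ptr s -> i < size p ->
  val s i.+1 = nth BLeaf (E s) (lab p i).-1 /\
  0 < lab p i <= count is_vertex (take i.+2 s).
Proof.
move=> h Hv Hp ip; have [e1 e2] := hyp_nth h ip.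
have H2 : i.+1 < size s by rewrite (hyp_size h); lia.
rewrite /val /lab e1; have := Hp i.+1 H2.
case: (nth TN s i.+1) e2 => [|k|] //= _.
- move=> /andP [k1 k2]; split => //; rewrite k1 /=.
  by apply: (leq_trans k2); apply: count_take_mono.
- move=> _; rewrite /cntv (hyp_cntv _ h) /yend (hyp_V _ h).
  by case: h => -> _ _ /=.
Qed.

Lemma hyp_V0 s s' p j : hyp s s' p -> valid s -> j < size p -> nth V p j = V -> 0 < j.
Proof.
move=> h Hv jp pj; case: j jp pj => // jp pj.
have := hyp_yx h Hv jp; rewrite /xend /yend.
case: h => _ _ E1; subst p; case: s' jp pj => //= x s' _.
by case: x => //=; rewrite take0.
Qed.

Lemma vlemma s s' p j : hyp s s' p -> valid s -> ptr s -> j < size p -> nth V p j = V ->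
  [/\ nth BLeaf (st s j.+1).1 1 = nth BLeaf (E s) (v1 p j).-1,
      0 < v1 p j <= count is_vertex (take j.+1 s),
      nth BLeaf (st s j.+1).1 0 = nth BLeaf (E s) (v2 p j).-1 &
      0 < v2 p j <= count is_vertex (take j.+1 s)].
Proof.
move=> h Hv Hp jp pj.
have j0 := hyp_V0 h Hv jp pj.
have sz := hyp_size h.
have [e1 e2] := hyp_nth h jp; rewrite pj in e1.
have tnj : nth TN s j.+1 = TN by case: (nth TN s j.+1) e1 e2.
have js : j.+1 < size s by rewrite sz.
have := D_S Hv js; rewrite tnj /= => -[HD HD2].
have d0 : 0 < D s j.+2 by apply: D_pos => //; rewrite sz.
have [st2 st3] : nth BLeaf (st s j.+1).1 0 = nth BLeaf (E s) (v2 p j).-1 /\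
   0 < v2 p j <= count is_vertex (take j.+1 s).
  have E0 := @stack_nth s j.+1 (D s j.+1) j.+1 Hv Hp (ltnW js).
  rewrite subnn in E0; rewrite E0 //; last first.
  - by move=> k' /andP [a b]; lia.
  - by rewrite HD /=.
  have [j' ej] : exists j', j = j'.+1 by exists j.-1; lia.
  subst j; rewrite /v2 /=; exact: hyp_lab h Hv Hp (ltnW jp).
set d := D s j.+2.
have online : forall i, i < j -> on_line p i j = (D s i.+2 == d).
  by move=> i ij; rewrite (hyp_online h Hv) //; lia.
have Hidx : D s j.+1 - d = 1 by rewrite HD /d; lia.
case: (boolP [exists i : 'I_j, on_line p i j]) => [/existsP [i0 Pi0] | Hn].
- have [i [ij Pi Hi]] := exists_last (P := fun i => on_line p i j)
     (ex_intro _ (nat_of_ord i0) (conj (ltn_ord i0) Pi0)).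
  have lf := last_filter_iota ij Pi Hi.
  have Ev1 : v1 p j = lab p i.
    rewrite /v1; case Ec: [seq x <- iota 0 j | on_line p x j] => [|c cs].
      have : i \in [seq x <- iota 0 j | on_line p x j] by rewrite mem_filter Pi mem_iota.
      by rewrite Ec.
    by rewrite -Ec lf.
  have [l1 l2] := hyp_lab h Hv Hp (ltn_trans ij jp).
  split => //; rewrite ?Ev1.
  + rewrite -l1 -Hidx; apply: (stack_nth (k := i.+2)) => //.
    * by rewrite sz; lia.
    * by rewrite HD; lia.
    * by apply/eqP; rewrite -online.
    * move=> k' /andP [a b].
      have [i' ei] : exists i', k' = i'.+2 by exists (k' - 2); lia.
      subst k'; have : ~~ on_line p i' j by apply: Hi; lia.
      by rewrite online; [move=> /eqP|lia].
  + move: l2 => /andP [-> l2] /=; apply: (leq_trans l2); apply: count_take_mono; lia.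
- have Ev1 : v1 p j = 1.
    rewrite /v1; case Ec: [seq x <- iota 0 j | on_line p x j] => [|c cs] //.
    have : c \in [seq x <- iota 0 j | on_line p x j] by rewrite Ec inE eqxx.
    rewrite mem_filter mem_iota /= => /andP [Pc cj].
    by move: Hn; rewrite negb_exists => /forallP /(_ (Ordinal cj)); rewrite Pc.
  have Hno : forall i, i < j -> D s i.+2 <> d.
    move=> i ij /eqP; rewrite -online // => Pi.
    by move: Hn; rewrite negb_exists => /forallP /(_ (Ordinal ij)); rewrite Pi.
  have D1 : D s 1 = 1 by case: h => -> _ _; rewrite /D /= take0.
  have dd : d = 1.
    case: (ltngtP d 1) => dg //; first by lia.
    have Hf : forall k, 1 <= k < j.+1 -> D s k.+1 <= (D s k).+1.
      move=> k /andP [a b]; have kb : k < size s by rewrite sz; lia.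
      by have := D_S Hv kb; case: (isTN _) => /=; lia.
    have Hc : D s 1 <= d <= D s j.+1 by rewrite D1 HD; lia.
    have [k [hk Dk]] := IVT (isT : 1 <= j.+1) Hf Hc.
    case: k hk Dk => [|[|k']] hk Dk; try lia.
    by exfalso; apply: (Hno k'); [lia | ].
  split => //; rewrite ?Ev1.
  + have E0 := @stack_nth s j.+1 d 1 Hv Hp (ltnW js).
    rewrite Hidx in E0; rewrite E0 //.
    * by rewrite /val; case: h => E1 _ _; rewrite E1 /= take0.
    * by rewrite HD; lia.
    * by rewrite D1 dd.
    * move=> k' /andP [a b].
      have [i' ei] : exists i', k' = i'.+2 by exists (k' - 2); lia.
      by subst k'; apply: Hno; lia.
  + by case: h => -> _ _ /=.
Qed.

Lemma TN_node s m : valid s -> m < size s -> nth TN s m = TN ->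
  nth BLeaf (E s) (cntv (take m s)) =
  BNode (nth BLeaf (st s m).1 1) (nth BLeaf (st s m).1 0).
Proof.
move=> Hv ms e; rewrite E_app ?e //.
have := st_cases Hv ms; rewrite e => -[r [l [rest [-> ->]]]] //.
Qed.

Lemma TL_node s m : valid s -> m < size s -> nth TN s m = TL ->
  nth BLeaf (E s) (cntv (take m s)) = BLeaf.
Proof.
move=> Hv ms e; rewrite E_app ?e //.
by have := st_cases Hv ms; rewrite e => ->.
Qed.

Lemma sec_val s m : valid s -> ptr s -> 0 < m < size s -> isLf (nth TN s m) ->
  nth BLeaf (st s m.+1).1 1 = val s m.-1.
Proof.
move=> Hv Hp /andP [m0 ms] hl.
have := D_S Hv ms; move: hl; rewrite /isLf; case: (isTN _) => //= _ HD.
have d0 : 0 < D s m by apply: D_pos => //; rewrite m0 ltnW.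
have E0 := @stack_nth s m.+1 (D s m) m Hv Hp ms.
rewrite HD subSnn in E0; apply: E0 => //.
- lia.
- move=> k' /andP [a b]; have e : k' = m.+1 by lia.
  by rewrite e HD; lia.
Qed.

Lemma sizeE s : valid s -> size (E s) = cntv s.
Proof.
move=> Hv; have [_ H] := st_size Hv (leqnn (size s)).
by move: H; rewrite /st take_size.
Qed.

Lemma inv_vertex s m a : m <= size s -> a < cntv (take m s) ->
  exists m', [/\ m' < m, is_vertex (nth TN s m') & cntv (take m' s) = a].
Proof.
elim: m => [|m IH] ms; first by rewrite take0.
rewrite /cntv cnt_S // -/(cntv _) => ha.
case: (ltnP a (cntv (take m s))) => h.
  by have [m' [x y z]] := IH (ltnW ms) h; exists m'; split => //; lia.
case iv: (is_vertex (nth TN s m)) ha => /= ha; rewrite /cntv /= in h ha *; last by lia.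
by exists m; split => //; lia.
Qed.

Definition step_tok (x : step) : tok := if x is H k then TP k else TN.

Lemma map_tok_inj u1 u2 : ~~ has isTL u1 -> ~~ has isTL u2 ->
  map tok_step u1 = map tok_step u2 -> u1 = u2.
Proof.
elim: u1 u2 => [|x u1 IH] [|y u2] //=; rewrite !negb_or => /andP [hx h1] /andP [hy h2] [exy e].
rewrite (IH u2) //; congr (_ :: _).
by case: x y hx hy exy => [|k|] [|k'|] //= _ _ [->].
Qed.

Lemma step_tokK p : map tok_step (map step_tok p) = p.
Proof. by elim: p => [|[k|] p IH] //=; rewrite IH. Qed.

Lemma step_tok_noTL p : ~~ has isTL (map step_tok p).
Proof. by elim: p => [|[k|] p IH]. Qed.

Definition C_cond (p : seq step) := forall i h1 h2, i.+2 < size p ->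
    nth V p i = H h1 -> nth V p i.+1 = H h2 -> nth V p i.+2 = V ->
    forall j, j < i -> nth V p j = V -> (h1, h2) <> (v1 p j, v2 p j).

Lemma TL0 s s' p i : hyp s s' p -> i < size s -> nth TN s i = TL -> i = 0.
Proof.
move=> h; case: i => // i iS e.
have ip : i < size p by rewrite -ltnS -(hyp_size h).
have [_ e2] := hyp_nth h ip.
by rewrite e in e2.
Qed.

Lemma s0 s s' p : hyp s s' p -> nth TN s 0 = TL.
Proof. by case=> ->. Qed.

Lemma tokp s s' p i : hyp s s' p -> i.+1 < size s -> nth V p i = tok_step (nth TN s i.+1).
Proof.
move=> h iS; have ip : i < size p by rewrite -ltnS -(hyp_size h).
by have [] := hyp_nth h ip.
Qed.

Lemma dist_pref s s' p m : hyp s s' p -> valid s -> ptr s -> C_cond p -> m <= size s ->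
  forall a b, a < count is_vertex (take m s) -> b < count is_vertex (take m s) ->
  nth BLeaf (E s) a = nth BLeaf (E s) b -> a = b.
Proof.
move=> h Hv Hp HC; elim: m => [|m IH] ms; first by rewrite take0.
have ms' : m < size s by [].
have IH' := IH (ltnW ms).
have sz := hyp_size h.
set c := count is_vertex (take m s).
have claim : forall a, a < c -> is_vertex (nth TN s m) ->
    nth BLeaf (E s) a <> nth BLeaf (E s) c.
  move=> a ha iv.
  case ex: (nth TN s m) iv => [|k|] // _.
    by have m0 := TL0 h ms' ex; move: ha; rewrite /c m0 take0.
  have EN := TN_node Hv ms' ex; rewrite /cntv -/c in EN; rewrite EN.
  have [m' [m'm iv' em']] := inv_vertex (ltnW ms') ha.
  have m's : m' < size s by lia.
  case ex': (nth TN s m') iv' => [|k'|] // _.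
    by have := TL_node Hv m's ex'; rewrite em' => ->.
  have EN' := TN_node Hv m's ex'; rewrite em' in EN'; rewrite EN' => -[EL ER].
  have [j ej] : exists j, m' = j.+1.
    have m'0 : 0 < m' by case: (posnP m') => // e0; rewrite e0 (s0 h) in ex'.
    by exists m'.-1; lia.
  subst m'.
  have jp : j < size p by lia.
  have pj : nth V p j = V by rewrite (tokp h) // ex'.
  have [L1 B1 R1 B2] := vlemma h Hv Hp jp pj.
  have [m1 em] : exists m1, m = m1.+1 by exists m.-1; lia.
  subst m.
  have m1s : m1 < size s by lia.
  have cS1 := cnt_S is_vertex m1s.
  have mono1 : count is_vertex (take j.+1 s) <= count is_vertex (take m1 s).
    by apply: count_take_mono; lia.
  case ey: (nth TN s m1) cS1 => [|k1|] cS1; simpl in cS1.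
  - by have := TL0 h m1s ey; lia.
  - have m10 : 0 < m1 by case: (posnP m1) => // e0; rewrite e0 (s0 h) in ey.
    have [m2 em1] : exists m2, m1 = m2.+1 by exists m1.-1; lia.
    subst m1.
    have m2s : m2 < size s by lia.
    have cS2 := cnt_S is_vertex m2s.
    have Rv : nth BLeaf (st s m2.+2).1 0 = nth BLeaf (E s) k1.-1.
      by rewrite top_val // /val ey.
    have Lv : nth BLeaf (st s m2.+2).1 1 = val s m2.
      by apply: sec_val => //; rewrite ey.
    case ez: (nth TN s m2) cS2 => [|k2|] cS2; simpl in cS2.
    + have e0 := TL0 h m2s ez; subst m2.
      have ej : j = 0 by lia.
      by subst j; rewrite ey in ex'.
    +
      have m20 : 0 < m2 by case: (posnP m2) => // e0; rewrite e0 (s0 h) in ez.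
      have [i ei] : exists i, m2 = i.+1 by exists m2.-1; lia.
      subst m2.
      have ip : i.+2 < size p by lia.
      have pi0 : nth V p i = H k2 by rewrite (tokp h) ?ez //; lia.
      have pi1 : nth V p i.+1 = H k1 by rewrite (tokp h) ?ey //; lia.
      have pi2 : nth V p i.+2 = V by rewrite (tokp h) ?ex //; lia.
      have ji : j < i.
        case: (ltnP j i) => // ij.
        have : j.+1 = i.+1 \/ j.+1 = i.+2 by lia.
        by case=> e; [rewrite e ez in ex' | rewrite e ey in ex'].
      have [lab0 lb0] := hyp_lab h Hv Hp (ltnW (ltnW ip)).
      have [lab1 lb1] := hyp_lab h Hv Hp (ltnW ip).
      rewrite /lab pi0 in lab0 lb0; rewrite /lab pi1 in lab1 lb1.
      have mono2 : count is_vertex (take i.+2 s) <= count is_vertex (take i.+3 s).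
        by apply: count_take_mono.
      apply: (HC i k2 k1 ip pi0 pi1 pi2 j ji pj).
      have e1 : k2.-1 = (v1 p j).-1.
        apply: IH' => //; first by rewrite /c in cS1 *; lia.
        - by rewrite /c in cS1 *; lia.
        - by rewrite -L1 EL Lv lab0.
      have e2 : k1.-1 = (v2 p j).-1.
        apply: IH' => //; first by rewrite /c in cS1 *; lia.
        - by rewrite /c in cS1 *; lia.
        - by rewrite -R1 ER Rv.
      congr (_, _); lia.
    + have j2 : j.+1 <= m2.
        case: (ltnP m2 j.+1) => // ij.
        have : j.+1 = m2.+1 by lia.
        by move=> e; rewrite e ey in ex'.
      have mono3 : count is_vertex (take j.+1 s) <= count is_vertex (take m2 s).
        by apply: count_take_mono.
      have Lv' : val s m2 = nth BLeaf (E s) (count is_vertex (take m2.+1 s)).-1.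
        by rewrite /val ez.
      have e1 : (v1 p j).-1 = (count is_vertex (take m2.+1 s)).-1.
        apply: IH' => //; first by rewrite /c in cS1 *; lia.
        - by rewrite /c in cS1 *; lia.
        - by rewrite -L1 EL Lv Lv'.
      rewrite /c in cS1; lia.
  - have Rv : nth BLeaf (st s m1.+1).1 0 = nth BLeaf (E s) (count is_vertex (take m1.+1 s)).-1.
      by rewrite top_val // /val ey.
    have e1 : (v2 p j).-1 = (count is_vertex (take m1.+1 s)).-1.
      apply: IH' => //; first by rewrite /c in cS1 *; lia.
      - by rewrite /c in cS1 *; lia.
      - by rewrite -R1 ER Rv.
    rewrite /c in cS1; lia.
move=> a b; rewrite cnt_S // -/c => ha hb eab.
case: (ltnP a c) => ha'; case: (ltnP b c) => hb'.
- exact: IH'.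
- have iv : is_vertex (nth TN s m) by move: hb; case: (is_vertex _) => /=; lia.
  have eb : b = c by move: hb; case: (is_vertex _) => /=; lia.
  by subst b; case: (claim a ha' iv).
- have iv : is_vertex (nth TN s m) by move: ha; case: (is_vertex _) => /=; lia.
  have ea : a = c by move: ha; case: (is_vertex _) => /=; lia.
  by subst a; case: (claim b hb' iv).
- by move: ha hb; case: (is_vertex _) => /=; lia.
Qed.

Lemma tokH x k : tok_step x = H k -> ~~ isTL x -> x = TP k.
Proof. by case: x => [|k'|] //= [->]. Qed.

Lemma dir1 n t : relaxed n t -> compacted t ->
  C_decorated (Dyck t) /\ ends_at (Dyck t) n n.
Proof.
move=> [Hn Hlm Hptr] Hc.
have [s' [Es Hs']] := (lm_post t).1 Hlm.
have hp : Dyck t = map tok_step s' by rewrite /Dyck Es.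
have h : hyp (post t) s' (Dyck t) by [].
have Hv : valid (post t) by apply: valid_post.
have Hp : ptr (post t) := Hptr.
have sz := hyp_size h.
have cT := cntTN_post t; have cL := cntLf_post t.
rewrite Es /= in cT cL.
split; last first.
  split; rewrite hp count_map.
  + have -> : count (preim tok_step isH) s' = count isLf s' by apply: eq_count; case.
    rewrite /isLf /= in cL; rewrite /isLf; lia.
  + have -> : count (preim tok_step isV) s' = count isTN s' by apply: eq_count; case.
    lia.
split.
  move=> i ip; split; first exact: hyp_yx h Hv ip.
  have [e1 e2] := hyp_nth h ip; rewrite e1.
  have iS : i.+1 < size (post t) by rewrite sz.
  have := Hp i.+1 iS.
  case: (nth TN (post t) i.+1) e2 => [|k|] //= _ /andP [k1 k2].
  rewrite k1 /=; rewrite (hyp_cntv _ h) in k2; rewrite (hyp_V _ h).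
  by move: k2; rewrite Es.
move=> i h1 h2 ip e1 e2 e3 j ji ej [E1 E2].
set p := Dyck t in ip e1 e2 e3 ej E1 E2 h sz.
set s := post t in Hv Hp h sz Hc Es.
have jp : j < size p by lia.
have [Lv1 Bv1 Lv2 Bv2] := vlemma h Hv Hp jp ej.
have ip0 : i < size p by lia.
have ip1 : i.+1 < size p by lia.
have t1 : nth TN s i.+1 = TP h1.
  by have [a b] := hyp_nth h ip0; apply: tokH b; rewrite -a.
have t2 : nth TN s i.+2 = TP h2.
  by have [a b] := hyp_nth h ip1; apply: tokH b; rewrite -a.
have t3 : nth TN s i.+3 = TN.
  have [a b] := hyp_nth h ip; by move: a b; rewrite e3; case: (nth TN s i.+3).
have tj : nth TN s j.+1 = TN.
  have [a b] := hyp_nth h jp; by move: a b; rewrite ej; case: (nth TN s j.+1).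
have js : j.+1 < size s by rewrite sz.
have is3 : i.+3 < size s by rewrite sz.
have is2 : i.+2 < size s by rewrite sz; lia.
have is1 : i.+1 < size s by rewrite sz; lia.
have N1 := TN_node Hv js tj.
rewrite Lv1 Lv2 in N1.
have N2 := TN_node Hv is3 t3.
rewrite top_val // in N2.
rewrite sec_val // ?t2 //= in N2.
have [la lb] := hyp_lab h Hv Hp ip1.
have [la' lb'] := hyp_lab h Hv Hp ip0.
rewrite la la' /lab e1 e2 E1 E2 in N2.
have HE : B_list t = E s by rewrite Blist_run.
apply: (Hc (cntv (take j.+1 s)) (cntv (take i.+3 s))); last by rewrite HE N1 N2.
rewrite HE sizeE // /cntv.
have c1 := cnt_S is_vertex js; rewrite tj /= in c1.
have c2 := cnt_S is_vertex is1; rewrite t1 /= in c2.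
have c3 := cnt_S is_vertex is2; rewrite t2 /= in c3.
have c4 := cnt_S is_vertex is3; rewrite t3 /= in c4.
have m1 : count is_vertex (take j.+2 s) <= count is_vertex (take i.+1 s) by apply: count_take_mono.
have m2 := count_take_le is_vertex i.+4 s.
lia.
Qed.

Lemma dir2 n p : C_decorated p -> ends_at p n n ->
  exists t, [/\ relaxed n t, compacted t & Dyck t = p].
Proof.
move=> [Hd HC] [EH EV].
set s' := map step_tok p; set s := TL :: s'.
have h : hyp s s' p by split; [| exact: step_tok_noTL | by rewrite step_tokK].
have sz := hyp_size h.
have Hv : valid s.
  move=> m /andP [m0 ms]; case: m m0 ms => [|[|i]] m0 ms //=; first by rewrite take0.
  have ip : i < size p by rewrite -ltnS -ltnS -sz.
  have [yx _] := Hd i ip; move: yx.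
  rewrite /yend /xend (hyp_V _ h) (hyp_H _ h) /= /isLf; lia.
have Hp : ptr s.
  case=> [|i] iS //.
  have ip : i < size p by rewrite -ltnS -sz.
  have [_ hd] := Hd i ip; have [e1 e2] := hyp_nth h ip.
  rewrite e1 in hd.
  case: (nth TN s i.+1) e2 hd => [|k|] //= _ /andP [k1 k2].
  have hc := hyp_cntv i h; have hv := hyp_V i h; simpl in hc; lia.
have cTN : count isTN s = n.
  by rewrite /= /s' count_map -EV; apply: eq_count; case.
have cLf : count isLf s = n.+1.
  rewrite /= /s' count_map -EH.
  have -> : count (preim step_tok isLf) p = count isH p by apply: eq_count; case.
  by rewrite add1n.
have [P1 P2] := parse_ok (st := [::]) (s := s) (fun i iS ei => TN_D Hv iS ei).
rewrite cTN cLf in P2.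
case Ef: (foldl pstep [::] s) P1 P2 => [|t [|t' r]] /= P1 P2; [lia | | lia].
rewrite cats0 in P1.
exists t; split.
- split.
  + by rewrite -cntTN_post P1.
  + by apply/lm_post; exists s'; rewrite P1; split => //; apply: step_tok_noTL.
  + by rewrite /pointers_ok P1.
- rewrite /compacted Blist_run P1 -/(E s) sizeE // => i j /andP [ij jS] eij.
  have ha : i < count is_vertex (take (size s) s) by rewrite take_size; exact: ltn_trans ij jS.
  have hb : j < count is_vertex (take (size s) s) by rewrite take_size.
  have := dist_pref h Hv Hp HC (leqnn (size s)) ha hb eij; lia.
- by rewrite /Dyck P1 /= step_tokK.
Qed.

Lemma tok_inj_post t1 t2 : leftmost_ok t1 -> leftmost_ok t2 -> Dyck t1 = Dyck t2 -> t1 = t2.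
Proof.
move=> /lm_post [s1 [E1 H1]] /lm_post [s2 [E2 H2]].
rewrite /Dyck E1 E2 /= => e; apply: post_inj; rewrite E1 E2.
by rewrite (map_tok_inj H1 H2 e).
Qed.

Unset Implicit Arguments.

Theorem proposition2p10 (n : nat) :
  (forall t, relaxed n t -> compacted t ->
     C_decorated (Dyck t) /\ ends_at (Dyck t) n n) /\
  (forall t1 t2, relaxed n t1 -> compacted t1 ->
     relaxed n t2 -> compacted t2 -> Dyck t1 = Dyck t2 -> t1 = t2) /\
  (forall p, C_decorated p -> ends_at p n n ->
     exists t, [/\ relaxed n t, compacted t & Dyck t = p]).
Proof.
split; first exact: dir1.
split; last exact: dir2.
by move=> t1 t2 [_ l1 _] _ [_ l2 _] _; apply: tok_inj_post.
Qed.
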